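(* Let $(E,\tau)$ be a convex space. Then $(E,\tau)$ is uniquely generated if and only if for all $X,Y\subseteq E$, $\tau(X)=\tau(Y)$ implies $\tau(X\cap Y)=\tau(X)=\tau(Y)$.
   Context: $E$ is a finite set and $\tau:2^E\to 2^E$. $(E,\tau)$ is a convex space if (C1) $X\subseteq\tau(X)$ for all $X\subseteq E$, and (convexity) for all $X\subseteq Y\subseteq Z\subseteq E$ with $\tau(X)=\tau(Z)$ we have $\tau(Y)=\tau(X)$. For $X\subseteq E$, a generator of $X$ is any $B\subseteq E$ with $\tau(B)=\tau(X)$; a basis of $X$ is an inclusion-minimal generator of $X$. The space is uniquely generated if every $X\subseteq E$ has exactly one basis. *)

(* Defs.v *)
From mathcomp Require Import all_boot.
Set Implicit Arguments. Unset Strict Implicit. Unset Printing Implicit Defensive.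

Definition convex_space (E : finType) (tau : {set E} -> {set E}) : Prop :=
  (forall X : {set E}, X \subset tau X) /\
  (forall X Y Z : {set E}, X \subset Y -> Y \subset Z -> tau X = tau Z ->
     tau Y = tau X).

Definition generator (E : finType) (tau : {set E} -> {set E}) (X B : {set E}) : Prop :=
  tau B = tau X.

Definition basis (E : finType) (tau : {set E} -> {set E}) (X B : {set E}) : Prop :=
  generator tau X B /\ (forall C : {set E}, C \subset B -> generator tau X C -> C = B).

Definition uniquely_generated (E : finType) (tau : {set E} -> {set E}) : Prop :=
  forall X : {set E}, exists! B : {set E}, basis tau X B.

(* Main.v *)
Require Import Defs.
From mathcomp Require Import all_boot.

Lemma basis_in (E : finType) (tau : {set E} -> {set E}) (X : {set E}) :
  exists2 B, basis tau X B & B \subset X.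
Proof.
have [B /minsetP [/eqP PB minB] sBX] :=
  @minset_exists _ (fun A => tau A == tau X) X (eqxx _).
exists B => //; split => // C sCB gC.
by apply: minB => //; apply/eqP.
Qed.

Theorem mainTheorem8 (E : finType) (tau : {set E} -> {set E}) :
  convex_space tau ->
  (uniquely_generated tau <->
   (forall X Y : {set E}, tau X = tau Y ->
      tau (X :&: Y) = tau X /\ tau X = tau Y)).
Proof.
move=> [_ conv]; split.
- move=> ug X Y eXY; split => //.
  have [B bB sBX] := @basis_in _ tau X.
  have [C bC sCY] := @basis_in _ tau Y.
  have bC' : basis tau X C.
    by case: bC => gC mC; split; rewrite /generator ?eXY //; move=> D sD gD; apply: mC; rewrite /generator -eXY.
  have [B0 [_ uB]] := ug X.
  have eBC : B = C by rewrite -(uB _ bB) (uB _ bC').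
  subst C.
  case: bB => gB _.
  have sBI : B \subset X :&: Y by rewrite subsetI sBX sCY.
  have := conv B (X :&: Y) X sBI (subsetIl _ _) gB.
  by move=> ->.
- move=> H X.
  have [B bB _] := @basis_in _ tau X.
  exists B; split => // C bC.
  case: bB => gB mB; case: bC => gC mC.
  have [h _] := H B C (etrans gB (esym gC)).
  have e1 : B :&: C = B by apply: mB; [exact: subsetIl | rewrite /generator h].
  have e2 : B :&: C = C by apply: mC; [exact: subsetIr | rewrite /generator h gB -gC].
  by rewrite -e1 e2.
Qed.
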